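(* Let $0<\underline{s}<\overline{s}<1$, $p\in(0,1)$, $u,v>0$ with $u\ne v$, with $\mathcal{E}_0\neq\emptyset$, and fix $\varepsilon_0>0$ and $n\in\mathbb{N}$. Let $F_n$ be the set of $f\in F^\infty_{(\underline{s},\overline{s})}$ whose stationary set $$S_f=\{c\in C_{\varepsilon_0}: G_f(\lambda,0)=G_f(\lambda,c)=0 \text{ for some }\lambda\in\mathcal{E}_0\cap\mathcal{E}_c\}$$ has Lebesgue measure at least $\frac1n$, and let $\overline{F}_n$ be its closure in $F^\infty_{(\underline{s},\overline{s})}$ (for the $L_\infty$-norm). If $f\in\overline{F}_n$, then there exists $S\subset C_{\varepsilon_0}$ with Lebesgue measure $m(S)\ge\frac1n$ such that for every $c\in S$ the system $G_f(\lambda,0)=G_f(\lambda,c)=0$ has a solution $\lambda\in\overline{\mathcal{E}}_0\cap\overline{\mathcal{E}}_c$.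
   Context: $F^\infty_{(\underline{s},\overline{s})}=\{f\in L_\infty(\underline{s},\overline{s})\cap C^0(\underline{s},\overline{s}): \int_{\underline{s}}^{\overline{s}} f(s)\frac{1-2s}{s}ds=0,\ \int_{\underline{s}}^{\overline{s}} f=1,\ f\ge0,\ f(s)\frac{1-s}{s}\in L_\infty(\underline{s},\overline{s})\}$ with the $L_\infty$-norm topology. For $\lambda>0$, $c\in(-1,u)\cap(-v,1)$: $m(\lambda,c)=\frac{\lambda(1+c)}{\lambda(1+c)+(u-c)}$, $mm(\lambda,c)=\frac{\lambda(1-c)}{\lambda(1-c)+(v+c)}$; $\mathcal{E}_c=\{\lambda>0: m(\lambda,c),mm(\lambda,c)\in(\underline{s},\overline{s})\}$, and $\overline{\mathcal{E}}_c$ denotes its closure in $\mathbb{R}$. $C=\{c\in(-1,u)\cap(-v,1):\mathcal{E}_c\ne\emptyset\}\setminus\{0\}$, $C_{\varepsilon_0}=C\cap(-1+\varepsilon_0,u-\varepsilon_0)\cap(-v+\varepsilon_0,1-\varepsilon_0)$. For $\lambda$ with $m(\lambda,c),mm(\lambda,c)\in[\underline{s},\overline{s}]$, $G_f(\lambda,c)=p\int_{\underline{s}}^{m(\lambda,c)} f(s)\frac{1-2s}{s}ds+(1-p)\int_{mm(\lambda,c)}^{\overline{s}} f(s)\frac{1-2s}{s}ds$. *)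

(* Defs.v *)
From HB Require Import structures.
From mathcomp Require Import all_boot all_order all_algebra.
From mathcomp Require Import all_classical all_reals all_analysis.
Set Implicit Arguments. Unset Strict Implicit. Unset Printing Implicit Defensive.
Import Order.TTheory GRing.Theory Num.Theory.
Import numFieldNormedType.Exports.
Local Open Scope classical_set_scope.
Local Open Scope ring_scope.

Section Defs.
Variable R : realType.

Definition mfun (u lam c : R) : R := lam * (1 + c) / (lam * (1 + c) + (u - c)).
Definition mmfun (v lam c : R) : R := lam * (1 - c) / (lam * (1 - c) + (v + c)).

Definition wgt (s : R) : R := (1 - 2 * s) / s.

Definition Eset (sl su u v c : R) : set R :=
  [set lam | 0 < lam /\ sl < mfun u lam c < su /\ sl < mmfun v lam c < su].

Definition Cset (sl su u v : R) : set R :=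
  [set c | (-1 < c < u) /\ (- v < c < 1) /\ Eset sl su u v c !=set0 /\ c <> 0].

Definition Ceps (sl su u v eps0 : R) : set R :=
  [set c | Cset sl su u v c /\ (-1 + eps0 < c < u - eps0)
          /\ (- v + eps0 < c < 1 - eps0)].

Definition Gf (sl su p u v : R) (f : R -> R) (lam c : R) : R :=
  p * Rintegral lebesgue_measure `[sl, mfun u lam c] (fun s => f s * wgt s)
  + (1 - p) * Rintegral lebesgue_measure `[mmfun v lam c, su] (fun s => f s * wgt s).

(* membership in F^infty_{(sl,su)}; f is a (continuous) function on the open
   interval, its values outside (sl,su) are irrelevant *)
Definition Finf (sl su : R) (f : R -> R) : Prop :=
  (exists M : R, forall s, sl < s < su -> `|f s| <= M)
  /\ {within `]sl, su[, continuous f}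
  /\ (\int[lebesgue_measure]_(s in `]sl, su[) (f s * wgt s)%:E = 0%:E)%E
  /\ (\int[lebesgue_measure]_(s in `]sl, su[) (f s)%:E = 1%:E)%E
  /\ (forall s, sl < s < su -> 0 <= f s)
  /\ (exists M : R, forall s, sl < s < su -> `|f s * ((1 - s) / s)| <= M).

Definition Sstat (sl su p u v eps0 : R) (f : R -> R) : set R :=
  [set c | Ceps sl su u v eps0 c /\
     exists lam, Eset sl su u v 0 lam /\ Eset sl su u v c lam /\
       Gf sl su p u v f lam 0 = 0 /\ Gf sl su p u v f lam c = 0].

Definition Fn (sl su p u v eps0 : R) (n : nat) : set (R -> R) :=
  [set f | Finf sl su f /\ measurable (Sstat sl su p u v eps0 f) /\
     ((n%:R)^-1%:E <= lebesgue_measure (Sstat sl su p u v eps0 f))%E].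

(* closure of F_n inside F^infty for the L_infty (= sup, f continuous) norm *)
Definition Fnbar (sl su p u v eps0 : R) (n : nat) : set (R -> R) :=
  [set f | Finf sl su f /\ forall e : R, 0 < e ->
     exists g, Fn sl su p u v eps0 n g /\
       forall s, sl < s < su -> `|f s - g s| <= e].

End Defs.

(* Main.v *)
From HB Require Import structures.
From mathcomp Require Import all_boot all_order all_algebra.
From mathcomp Require Import all_classical all_reals all_analysis.
From mathcomp Require Import ring lra.
Require Import Defs.
From mathcomp Require Import measurable_realfun.
Import Order.TTheory GRing.Theory Num.Theory.
Import numFieldNormedType.Exports.
Local Open Scope classical_set_scope.
Local Open Scope ring_scope.
Set Implicit Arguments. Unset Strict Implicit. Unset Printing Implicit Defensive.

Notation mu := (@lebesgue_measure _).

Lemma itv_fin (R : realType) (a b : R) : (mu `]a, b[ < +oo)%E.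
Proof. by rewrite lebesgue_measure_itv/=; case: ifP => _; rewrite ?ltry. Qed.

Lemma J_int (R : realType) (sl su a b : R) (M : R) (h : R -> R) :
  sl <= a -> b <= su -> measurable_fun `]sl, su[ h ->
  (forall s, sl < s < su -> `|h s| <= M) ->
  mu.-integrable `]a, b[ (EFin \o h).
Proof.
move=> sla bsu mh hM; apply: measurable_bounded_integrable => //.
- exact: itv_fin.
- apply: measurable_funS mh => //= x; rewrite /= !in_itv/= => /andP[ax xb].
  idtac.
  by rewrite (le_lt_trans sla ax) (lt_le_trans xb bsu).
- exists M; split; first exact: num_real.
  move=> M' MM' x; rewrite /= in_itv/= => /andP[ax xb].
  apply: (le_trans (hM x _)); last exact: ltW.
  idtac.
  by rewrite (le_lt_trans sla ax) (lt_le_trans xb bsu).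
Qed.

Definition J {R : realType} (h : R -> R) (a b : R) := Rintegral mu `]a, b[ h.

Lemma J_split (R : realType) (sl su a x b M : R) (h : R -> R) :
  sl <= a -> a <= x -> x <= b -> b <= su -> measurable_fun `]sl, su[ h ->
  (forall s, sl < s < su -> `|h s| <= M) ->
  J h a b = J h a x + J h x b.
Proof.
move=> sla ax xb bsu mh hM.
have [xeb|xltb] := eqVneq x b.
  by rewrite /J xeb set_itvoo0 Rintegral_set0 addr0.
have xb' : x < b by rewrite lt_neqAle xltb.
have E : J h a b - J h a x = J h x b.
  rewrite /J (@Rintegral_itv_bndo_bndc R (BRight a) x h); last first.
    by apply: (J_int (sl:=sl) (su:=su) (M:=M)) => //; lra.
  have := @Rintegral_itvB R h (BRight a) (BLeft b) x.
  apply.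
  - exact: (J_int (sl:=sl) (su:=su) (M:=M)).
  - by rewrite bnd_simp.
  - by rewrite bnd_simp.
by rewrite -E addrC subrK.
Qed.

Lemma J_bound (R : realType) (sl su a b M : R) (h : R -> R) :
  sl <= a -> a <= b -> b <= su -> measurable_fun `]sl, su[ h ->
  (forall s, sl < s < su -> `|h s| <= M) ->
  `|J h a b| <= M * (b - a).
Proof.
move=> sla ab bsu mh hM.
have ih := J_int sla bsu mh hM.
rewrite /J; apply: (le_trans (le_normr_Rintegral _ _)) => //.
have -> : b - a = fine (mu `]a, b[) .
  rewrite lebesgue_measure_itv/= lte_fin.
  case: ifPn => H /=; first by [].

  have -> : a = b by apply/eqP; rewrite eq_le ab leNgt.
  by rewrite subrr.
rewrite -Rintegral_cst //; apply: le_Rintegral => //.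
- exact: integrable_norm.
- apply: measurable_bounded_integrable => //; first exact: itv_fin.
  exists `|M|; split; first exact: num_real.
  by move=> M' MM' x _; rewrite /= (le_trans _ (ltW MM')).
- move=> x; rewrite /= in_itv/= => /andP[ax xb]; apply: hM.
  by rewrite (le_lt_trans sla ax) (lt_le_trans xb bsu).
Qed.

Lemma J_lipl (R : realType) (sl su a b M : R) (h : R -> R) :
  sl <= a <= su -> sl <= b <= su -> measurable_fun `]sl, su[ h ->
  (forall s, sl < s < su -> `|h s| <= M) ->
  `|J h sl b - J h sl a| <= M * `|b - a|.
Proof.
move=> /andP[sla asu] /andP[slb bsu] mh hM.
wlog ab : a b sla asu slb bsu / a <= b.
  move=> W; have [ab|ba] := leP a b; first exact: W.
  by rewrite distrC (distrC b); apply: W => //; exact: ltW.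
rewrite (J_split (x:=a) _ _ _ _ mh hM) // addrC addKr.
by rewrite (ger0_norm (x:=b-a)) ?subr_ge0 // (J_bound _ _ _ mh hM).
Qed.

Lemma J_lipr (R : realType) (sl su a b M : R) (h : R -> R) :
  sl <= a <= su -> sl <= b <= su -> measurable_fun `]sl, su[ h ->
  (forall s, sl < s < su -> `|h s| <= M) ->
  `|J h a su - J h b su| <= M * `|b - a|.
Proof.
move=> /andP[sla asu] /andP[slb bsu] mh hM.
wlog ab : a b sla asu slb bsu / a <= b.
  move=> W; have [ab|ba] := leP a b; first exact: W.
  by rewrite distrC (distrC b); apply: W => //; exact: ltW.
rewrite (J_split (x:=b) _ _ _ _ mh hM) // addrK.
by rewrite (ger0_norm (x:=b-a)) ?subr_ge0 // (J_bound _ _ _ mh hM).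
Qed.

Lemma wgt_meas (R : realType) (sl su : R) : 0 < sl ->
  measurable_fun `]sl, su[ (@wgt R).
Proof.
move=> sl0; apply: open_continuous_measurable_fun; first exact: interval_open.
move=> x; rewrite inE/= in_itv/= => /andP[slx xsu].
have x0 : x != 0 by rewrite gt_eqF // (lt_trans sl0 slx).
rewrite /wgt; apply: cvgM.
  apply: cvgB; first exact: cvg_cst.
  apply: cvgM; first exact: cvg_cst.
  exact: cvg_id.
exact: cvgV x0 cvg_id.
Qed.

Lemma wgt_bound (R : realType) (sl su s : R) : 0 < sl -> su <= 1 ->
  sl < s < su -> `|wgt s| <= sl^-1.
Proof.
move=> sl0 su1 /andP[sls ssu].
have s0 : 0 < s by apply: lt_trans sls.
rewrite /wgt normrM normfV (gtr0_norm s0).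
have h1 : `|1 - 2 * s| <= 1.
  rewrite ler_norml; apply/andP; split; lra.
rewrite -[sl^-1]mul1r; apply: ler_pM => //.
  by rewrite invr_ge0 ltW.
by rewrite lef_pV2 // ?posrE // ltW.
Qed.

Definition Gh {R : realType} (sl su p u v : R) (h : R -> R) (lam c : R) :=
  p * J h sl (mfun u lam c) + (1 - p) * J h (mmfun v lam c) su.

Lemma Gf_Gh (R : realType) (sl su p u v : R) (f : R -> R) (lam c : R) :
  measurable_fun `]sl, su[ (fun s => f s * wgt s) ->
  sl <= mfun u lam c <= su -> sl <= mmfun v lam c <= su ->
  Gf sl su p u v f lam c = Gh sl su p u v (fun s => f s * wgt s) lam c.
Proof.
move=> mh /andP[m1 m2] /andP[mm1 mm2].
rewrite /Gf /Gh /J /Rintegral.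
rewrite (integral_itv_bndoo (x:=sl) (y:=mfun u lam c)); last first.
  apply/measurable_EFinP; apply: measurable_funS mh => //= x.
  rewrite /= !in_itv/= => /andP[ax xb].
  by rewrite ax (lt_le_trans xb m2).
rewrite (integral_itv_bndoo (x:=mmfun v lam c) (y:=su)) //.
apply/measurable_EFinP; apply: measurable_funS mh => //= x.
rewrite /= !in_itv/= => /andP[ax xb].
by rewrite xb (le_lt_trans mm1 ax).
Qed.

Lemma J_sub (R : realType) (sl su a b M1 M2 : R) (h1 h2 : R -> R) :
  sl <= a -> b <= su ->
  measurable_fun `]sl, su[ h1 -> (forall s, sl < s < su -> `|h1 s| <= M1) ->
  measurable_fun `]sl, su[ h2 -> (forall s, sl < s < su -> `|h2 s| <= M2) ->
  J h1 a b - J h2 a b = J (fun s => h1 s - h2 s) a b.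
Proof.
move=> sla bsu m1 b1 m2 b2; rewrite /J RintegralB //.
- exact: J_int sla bsu m1 b1.
- exact: J_int sla bsu m2 b2.
Qed.

Lemma Gh_sub (R : realType) (sl su p u v M1 M2 : R) (h1 h2 : R -> R) lam c :
  sl <= mfun u lam c <= su -> sl <= mmfun v lam c <= su ->
  measurable_fun `]sl, su[ h1 -> (forall s, sl < s < su -> `|h1 s| <= M1) ->
  measurable_fun `]sl, su[ h2 -> (forall s, sl < s < su -> `|h2 s| <= M2) ->
  Gh sl su p u v h1 lam c - Gh sl su p u v h2 lam c =
  Gh sl su p u v (fun s => h1 s - h2 s) lam c.
Proof.
move=> /andP[m1 m2] /andP[mm1 mm2] mh1 b1 mh2 b2; rewrite /Gh.
rewrite -(J_sub _ _ mh1 b1 mh2 b2) //.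
rewrite -(J_sub _ _ mh1 b1 mh2 b2) //.
by rewrite !mulrBr opprD !addrA; congr (_ + _); rewrite addrAC.
Qed.

Lemma Gh_bound (R : realType) (sl su p u v M : R) (h : R -> R) lam c :
  0 <= p <= 1 -> 0 <= M ->
  sl <= mfun u lam c <= su -> sl <= mmfun v lam c <= su ->
  measurable_fun `]sl, su[ h -> (forall s, sl < s < su -> `|h s| <= M) ->
  `|Gh sl su p u v h lam c| <= M * (su - sl).
Proof.
move=> /andP[p0 p1] M0 /andP[m1 m2] /andP[mm1 mm2] mh b; rewrite /Gh.
have J1 := J_bound (le_refl sl) m1 m2 mh b.
have J2 := J_bound mm1 mm2 (le_refl su) mh b.
apply: (le_trans (ler_normD _ _)).
rewrite !normrM (ger0_norm p0) (ger0_norm (x:=1-p)) ?subr_ge0 //.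
set a := `|J h _ _| in J1 *; set b' := `|J h _ _| in J2 *.
set m := mfun u lam c in J1 m1 m2 *; set mm := mmfun v lam c in J2 mm1 mm2 *.
have : p * a <= p * (M * (su - sl)).
  apply: ler_wpM2l => //; apply: (le_trans J1); apply: ler_wpM2l => //; lra.
have : (1 - p) * b' <= (1 - p) * (M * (su - sl)).
  apply: ler_wpM2l; first lra.
  apply: (le_trans J2); apply: ler_wpM2l => //; lra.
nra.
Qed.

Lemma Gh_lip (R : realType) (sl su p u v M : R) (h : R -> R) lam x c :
  0 <= p <= 1 -> 0 <= M ->
  sl <= mfun u lam c <= su -> sl <= mmfun v lam c <= su ->
  sl <= mfun u x c <= su -> sl <= mmfun v x c <= su ->
  measurable_fun `]sl, su[ h -> (forall s, sl < s < su -> `|h s| <= M) ->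
  `|Gh sl su p u v h lam c - Gh sl su p u v h x c| <=
    M * (`|mfun u lam c - mfun u x c| + `|mmfun v lam c - mmfun v x c|).
Proof.
move=> /andP[p0 p1] M0 ml mml mx mmx mh b; rewrite /Gh.
have J1 := J_lipl mx ml mh b.
have J2 := J_lipr mml mmx mh b.
rewrite opprD addrACA -!mulrBr.
apply: (le_trans (ler_normD _ _)).
rewrite !normrM (ger0_norm p0) (ger0_norm (x:=1-p)) ?subr_ge0 //.
rewrite (distrC (mmfun v x c)) in J2.
set a := `|J h _ _ - _| in J1 *; set b' := `|J h _ _ - _| in J2 *.
set d1 := `|mfun u lam c - _| in J1 *; set d2 := `|mmfun v lam c - _| in J2 *.
have : p * a <= M * d1.
  apply: (le_trans (ler_wpM2l p0 J1)).
  rewrite -[X in _ <= X]mul1r; apply: ler_wpM2r => //.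
  exact: mulr_ge0 M0 (normr_ge0 _).
have : (1 - p) * b' <= M * d2.
  have q0 : 0 <= 1 - p by lra.
  apply: (le_trans (ler_wpM2l q0 J2)).
  rewrite -[X in _ <= X]mul1r; apply: ler_wpM2r.
    exact: mulr_ge0 M0 (normr_ge0 _).
  lra.
rewrite mulrDr; lra.
Qed.

Lemma mfun_lip (R : realType) (u c l x : R) : -1 < c -> c < u -> 0 <= l -> 0 <= x ->
  `|mfun u l c - mfun u x c| <= (1 + c) / (u - c) * `|l - x|.
Proof.
move=> c1 cu l0 x0.
set a := 1 + c; set b := u - c.
have a0 : 0 < a by rewrite /a; lra.
have b0 : 0 < b by rewrite /b; lra.
have D1' : 0 <= l * a by rewrite mulr_ge0 // ltW.
have D2' : 0 <= x * a by rewrite mulr_ge0 // ltW.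
have D1 : 0 < l * a + b by lra.
have D2 : 0 < x * a + b by lra.
have E : mfun u l c - mfun u x c = (a * b * (l - x)) / ((l * a + b) * (x * a + b)).
  rewrite /mfun -/a -/b; field.
  by apply/andP; split; rewrite gt_eqF.
rewrite E normrM normfV !normrM (gtr0_norm a0) (gtr0_norm b0) (gtr0_norm D1)
  (gtr0_norm D2) -(gtr0_norm (mulr_gt0 D1 D2)).
rewrite ler_pdivrMr ?normr_gt0 ?mulf_neq0 ?gt_eqF //.
rewrite (gtr0_norm (mulr_gt0 D1 D2)).
have dn : 0 <= `|l - x| by [].
have bb : b * b <= (l * a + b) * (x * a + b) by nra.
set t := `|l - x|; set P := (l * a + b) * (x * a + b).
have -> : a / b * t * P = (a * t) * (P / b) by field; rewrite gt_eqF.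
have -> : a * b * t = (a * t) * b by ring.
apply: ler_wpM2l; first by rewrite mulr_ge0 // ltW.
by rewrite ler_pdivlMr.
Qed.


Lemma mmfun_lip (R : realType) (v c l x : R) : -v < c -> c < 1 -> 0 <= l -> 0 <= x ->
  `|mmfun v l c - mmfun v x c| <= (1 - c) / (v + c) * `|l - x|.
Proof.
move=> c1 cu l0 x0.
have -> : mmfun v l c = mfun v l (- c) by rewrite /mmfun /mfun opprK.
have -> : mmfun v x c = mfun v x (- c) by rewrite /mmfun /mfun opprK.
have -> : v + c = v - - c by rewrite opprK.
apply: mfun_lip => //; lra.
Qed.


Lemma cluster_in (R : realType) (mu : nat -> R) (x : R) (psi : R -> R) (L lo hi : R) :
  (forall d, 0 < d -> exists j, `|mu j - x| < d) -> 0 <= L ->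
  (forall j, lo < psi (mu j) < hi) ->
  (forall j, `|psi (mu j) - psi x| <= L * `|mu j - x|) ->
  lo <= psi x <= hi.
Proof.
move=> cl L0 hin hl.
have key : forall e, 0 < e -> exists j, `|psi (mu j) - psi x| <= e.
  move=> e e0.
  have d0 : 0 < e / (L + 1) by rewrite divr_gt0 //; lra.
  have [j hj] := cl _ d0; exists j.
  apply: (le_trans (hl j)).
  have -> : e = (L + 1) * (e / (L + 1)) by field; rewrite gt_eqF //; lra.
  have := normr_ge0 (mu j - x); move: hj; set t := `|_|; set q := e / _.
  nra.
apply/andP; split.
  apply/ler_addgt0Pr => e e0; have [j hj] := key e e0.
  have := hin j; move: hj; rewrite ler_norml => /andP[h1 h2] /andP[h3 h4]; lra.
rewrite -subr_ge0; apply/ler_addgt0Pr => e e0; have [j hj] := key e e0.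
have := hin j; move: hj; rewrite ler_norml => /andP[h1 h2] /andP[h3 h4]; lra.
Qed.

Lemma cluster_zero (R : realType) (mu : nat -> R) (x : R) (phi : R -> R) (K L : R) :
  (forall d, 0 < d -> forall N, exists j, (N <= j)%N /\ `|mu j - x| < d) -> 0 <= L ->
  (forall j, `|phi (mu j)| <= K / (j.+1)%:R) ->
  (forall j, `|phi (mu j) - phi x| <= L * `|mu j - x|) ->
  phi x = 0.
Proof.
move=> cl L0 hb hl.
have K0 : 0 <= K.
  by have := hb 0%N; rewrite divr1 => /(le_trans (normr_ge0 _)).
apply/eqP; rewrite -normr_le0; apply/ler_addgt0Pr => e e0; rewrite add0r.
have e20 : 0 < e / 2 by rewrite divr_gt0.
set N := Num.Def.truncn (K / (e / 2)).
have hN : K / (e / 2) < N.+1%:R by exact: truncnS_gt.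
have d0 : 0 < e / 2 / (L + 1) by rewrite divr_gt0 //; lra.
have [j [Nj hj]] := cl _ d0 N.
have h1 : `|phi (mu j)| <= e / 2.
  apply: (le_trans (hb j)).
  rewrite ler_pdivrMr ?ltr0n //.
  have : N.+1%:R <= j.+1%:R :> R by rewrite ler_nat ltnS.
  move: hN; rewrite ltr_pdivrMr //.
  move=> h2 h3; nra.
have h2 : `|phi (mu j) - phi x| <= e / 2.
  apply: (le_trans (hl j)).
  have -> : e / 2 = (L + 1) * (e / 2 / (L + 1)) by field; rewrite gt_eqF //; lra.
  have := normr_ge0 (mu j - x); move: hj; set t := `|_|; set q := e / 2 / _.
  nra.
have -> : phi x = phi (mu j) - (phi (mu j) - phi x) by ring.
apply: (le_trans (ler_normB _ _)).
move: h1 h2; set A := `|phi (mu j)|; set B := `|_ - _|.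
lra.
Qed.


Lemma seq_cluster (R : realType) (B : R) (mu : nat -> R) :
  (forall j, 0 <= mu j <= B) ->
  exists x, 0 <= x /\
   (forall d, 0 < d -> forall N, exists j, (N <= j)%N /\ `|mu j - x| < d) /\
   (forall A : set R, (forall j, A (mu j)) -> closure A x).
Proof.
move=> hB.
have [x [xin xcl]] : `[0, B] `&` cluster (mu @ \oo) !=set0.
  apply: (@segment_compact R 0 B (mu @ \oo)).

  by exists 0%N => // j _; rewrite /= in_itv/= hB.
exists x; split.
  by move: xin; rewrite /= in_itv/= => /andP[].
split.
  move=> d d0 N.
  have FA : (mu @ \oo) [set y | exists2 j, (N <= j)%N & mu j = y].
    by exists N => // j Nj; exists j.
  have [y [[j /= Nj <-] hy]] := xcl _ _ FA (nbhsx_ballx x d d0).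
  by exists j; split => //; move: hy; rewrite /ball/= distrC.
move=> A hA C nC.
apply: xcl nC.
by exists 0%N => // j _; apply: hA.
Qed.

Lemma finf_h (R : realType) (sl su : R) (f : R -> R) : 0 < sl -> sl < su -> su <= 1 ->
  Finf sl su f ->
  measurable_fun `]sl, su[ (fun s => f s * wgt s) /\
  exists M, 0 <= M /\ forall s, sl < s < su -> `|f s * wgt s| <= M.
Proof.
move=> sl0 slsu su1 [[Mf hMf] [cf _]].
split.
  apply: measurable_funM; last exact: wgt_meas.
  exact: subspace_continuous_measurable_fun.
exists (Mf * sl^-1); split.
  have : sl < (sl + su) / 2 < su by apply/andP; split; lra.
  move/hMf => h; apply: mulr_ge0; first exact: le_trans h.
  by rewrite invr_ge0 ltW.
move=> s hs; rewrite normrM; apply: ler_pM => //.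
  exact: hMf.
exact: wgt_bound sl0 su1 hs.
Qed.

Lemma approx (R : realType) (sl su p u v e : R) (f g : R -> R) (l c : R) :
  0 < sl -> sl < su -> su <= 1 -> 0 <= p <= 1 -> 0 <= e ->
  Finf sl su f -> Finf sl su g ->
  (forall s, sl < s < su -> `|f s - g s| <= e) ->
  sl <= mfun u l c <= su -> sl <= mmfun v l c <= su ->
  Gf sl su p u v g l c = 0 ->
  `|Gf sl su p u v f l c| <= e * sl^-1 * (su - sl).
Proof.
move=> sl0 slsu su1 hp e0 Ff Fg hfg hm hmm G0.
have [mf [Mf [Mf0 bf]]] := finf_h sl0 slsu su1 Ff.
have [mg [Mg [Mg0 bg]]] := finf_h sl0 slsu su1 Fg.
have -> : Gf sl su p u v f l c = Gf sl su p u v f l c - Gf sl su p u v g l c.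
  by rewrite G0 subr0.
rewrite (Gf_Gh p mf hm hmm) (Gf_Gh p mg hm hmm).
rewrite (Gh_sub p hm hmm mf bf mg bg).
apply: Gh_bound => //.
- by rewrite mulr_ge0 // invr_ge0 ltW.
- exact: measurable_funB.
- move=> s hs; rewrite -mulrBl normrM; apply: ler_pM => //.
    exact: hfg.
  exact: wgt_bound sl0 su1 hs.
Qed.

Lemma E0_bound (R : realType) (sl su u v l : R) : 0 < u -> su < 1 ->
  Eset sl su u v 0 l -> 0 <= l <= su * u / (1 - su).
Proof.
move=> u0 su1 [l0 [/andP[_ hm] _]].
rewrite ltW //= ler_pdivlMr; last lra.
move: hm; rewrite /mfun addr0 subr0 mulr1 ltr_pdivrMr; last lra.
nra.
Qed.

Lemma final_c (R : realType) (sl su p u v : R) (f : R -> R) (lamk : nat -> R) (x c K : R) :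
  0 < sl -> sl < su -> su <= 1 -> 0 <= p <= 1 ->
  -1 < c < u -> -v < c < 1 -> Finf sl su f -> 0 <= x ->
  (forall j, 0 <= lamk j) ->
  (forall d, 0 < d -> forall N, exists j, (N <= j)%N /\ `|lamk j - x| < d) ->
  (forall j, Eset sl su u v c (lamk j)) ->
  (forall j, `|Gf sl su p u v f (lamk j) c| <= K / (j.+1)%:R) ->
  Gf sl su p u v f x c = 0.
Proof.
move=> sl0 slsu su1 hp /andP[c1 cu] /andP[cv c1'] Ff x0 l0 cl hE hG.
have cl0 : forall d, 0 < d -> exists j, `|lamk j - x| < d.
  by move=> d d0; have [j [_ hj]] := cl d d0 0%N; exists j.
have L10 : 0 <= (1 + c) / (u - c) by rewrite divr_ge0 //; lra.
have L20 : 0 <= (1 - c) / (v + c) by rewrite divr_ge0 //; lra.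
have hmx : sl <= mfun u x c <= su.
  apply: (cluster_in (psi := fun l => mfun u l c) cl0 L10).
    by move=> j; have [_ [? _]] := hE j.
  by move=> j; apply: mfun_lip.
have hmmx : sl <= mmfun v x c <= su.
  apply: (cluster_in (psi := fun l => mmfun v l c) cl0 L20).
    by move=> j; have [_ [_ ?]] := hE j.
  by move=> j; apply: mmfun_lip.
have [mh [Mh [Mh0 bh]]] := finf_h sl0 slsu su1 Ff.
have hmj : forall j, sl <= mfun u (lamk j) c <= su.
  by move=> j; have [_ [/andP[? ?] _]] := hE j; rewrite !ltW.
have hmmj : forall j, sl <= mmfun v (lamk j) c <= su.
  by move=> j; have [_ [_ /andP[? ?]]] := hE j; rewrite !ltW.
rewrite (Gf_Gh p mh hmx hmmx).
apply: (cluster_zero (mu:=lamk) (phi := fun l => Gh sl su p u v (fun s => f s * wgt s) l c)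
  (K:=K) (L := Mh * ((1 + c) / (u - c) + (1 - c) / (v + c))) cl).
- by rewrite mulr_ge0 // addr_ge0.
- by move=> j; rewrite -(Gf_Gh p mh (hmj j) (hmmj j)).
- move=> j; apply: (le_trans (Gh_lip hp Mh0 (hmj j) (hmmj j) hmx hmmx mh bh)).
  rewrite -mulrA; apply: ler_wpM2l => //.
  rewrite mulrDl; apply: lerD.
    exact: mfun_lip.
  exact: mmfun_lip.
Qed.

Theorem proposition7 (R : realType) (sl su p u v eps0 : R) (n : nat)
  (hsl : 0 < sl) (hslsu : sl < su) (hsu : su < 1)
  (hp0 : 0 < p) (hp1 : p < 1) (hu : 0 < u) (hv : 0 < v) (huv : u != v)
  (hE0 : Eset sl su u v 0 !=set0) (heps : 0 < eps0) (hn : (0 < n)%N)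
  (f : R -> R) :
  Fnbar sl su p u v eps0 n f ->
  exists S : set R,
    S `<=` Ceps sl su u v eps0 /\ measurable S /\
    ((n%:R)^-1%:E <= lebesgue_measure S)%E /\
    forall c, S c ->
      exists lam, closure (Eset sl su u v 0) lam /\
                  closure (Eset sl su u v c) lam /\
                  Gf sl su p u v f lam 0 = 0 /\ Gf sl su p u v f lam c = 0.
Proof.
move=> [Ff hcl].
have su1 : su <= 1 by exact: ltW.
have hp : 0 <= p <= 1 by rewrite !ltW.
have [g hg] : {g : nat -> R -> R & forall k, Fn sl su p u v eps0 n (g k) /\
    forall s, sl < s < su -> `|f s - g k s| <= (k.+1%:R)^-1}.
  have hk : forall k : nat, exists gk, Fn sl su p u v eps0 n gk /\
      forall s, sl < s < su -> `|f s - gk s| <= (k.+1%:R)^-1.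
    by move=> k; apply: hcl; rewrite invr_gt0 ltr0n.
  exact: choice hk.
pose Sk k := Sstat sl su p u v eps0 (g k).
have mS : forall k, measurable (Sk k) by move=> k; have [[_ [? _]] _] := hg k.
have SC : forall k, Sk k `<=` Ceps sl su u v eps0 by move=> k c [].
exists (lim_sup_set Sk); split; [|split; [|split]].
- by move=> c /(_ 0%N I) [j _ hj]; exact: SC hj.
- apply: bigcap_measurable => // k _; apply: bigcup_measurable => j _; exact: mS.
- have Cb : forall k, Sk k `<=` `]-1, 1[.
    move=> k c /SC [[/andP[c1 _] [/andP[_ c2] _]] _].
    by rewrite /= in_itv/= c1 c2.
  have fin : (mu (\bigcup_(k in [set k | (0 <= k)%N]) Sk k) < +oo)%E.
    apply: (le_lt_trans _ (itv_fin (-1) 1)).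
    rewrite le_measure ?inE //.
    + by apply: bigcup_measurable => j _; exact: mS.
    + by move=> c [k _ hk]; exact: Cb hk.
  have cv := lim_sup_set_cvg mu Sk mS fin.
  rewrite -(cvg_lim (@ereal_hausdorff R) cv).
  apply: lime_ge; first exact: cvgP cv.
  apply: nearW => k /=.
  apply: (le_trans (hg k).1.2.2).
  rewrite le_measure ?inE //.
  all: try exact: mS.
  all: try (by apply: bigcup_measurable => j _; exact: mS).
  by move=> c hc; exists k => //=.
- move=> c hc.
  have hN : forall N, exists k, (N <= k)%N /\ Sk k c.
    by move=> N; have [k Nk hk] := hc N I; exists k.
  have [k0 [_ hk0]] := hN 0%N.
  have [[[/andP[c1 cu] [/andP[cv c1'] _]] _] _] := hk0.
  set K := sl^-1 * (su - sl).
  have K0 : 0 <= K by rewrite mulr_ge0 ?invr_ge0 //; lra.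
  have ltE : forall c' l, Eset sl su u v c' l ->
      sl <= mfun u l c' <= su /\ sl <= mmfun v l c' <= su.
    by move=> c' l [_ [/andP[? ?] /andP[? ?]]]; rewrite !ltW.
  have hlam : forall N : nat, exists l, Eset sl su u v 0 l /\ Eset sl su u v c l /\
      `|Gf sl su p u v f l 0| <= K / (N.+1)%:R /\
      `|Gf sl su p u v f l c| <= K / (N.+1)%:R.
    move=> N; have [k [Nk [_ [l [E0l [Ecl [G0 Gc]]]]]]] := hN N.
    have Fg := (hg k).1.1.
    have fg := (hg k).2.
    have e0 : 0 <= (k.+1%:R)^-1 :> R by rewrite invr_ge0.
    have bnd : (k.+1%:R)^-1 * sl^-1 * (su - sl) <= K / (N.+1)%:R.
      rewrite -mulrA mulrC ler_wpM2l // lef_pV2 ?posrE ?ltr0n // ler_nat ltnS.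
      exact: Nk.
    have [m1 m2] := ltE _ _ E0l.
    have [m3 m4] := ltE _ _ Ecl.
    exists l; split => //; split => //; split.
    + apply: le_trans bnd; exact: (approx hsl hslsu su1 hp e0 Ff Fg fg m1 m2 G0).
    + apply: le_trans bnd; exact: (approx hsl hslsu su1 hp e0 Ff Fg fg m3 m4 Gc).
  have [lamk hl] := choice hlam.
  have lnn : forall j, 0 <= lamk j <= su * u / (1 - su).
    by move=> j; exact: (E0_bound hu hsu (hl j).1).
  have lnn' : forall j, 0 <= lamk j by move=> j; have /andP[] := lnn j.
  have [x [x0 [xcl xclos]]] := seq_cluster lnn.
  exists x; split; [|split; [|split]].
  + by apply: xclos => j; exact: (hl j).1.
  + by apply: xclos => j; exact: (hl j).2.1.
  + apply: (final_c (lamk := lamk) (K := K) hsl hslsu su1 hp _ _ Ff x0 lnn' xcl).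
    * by apply/andP; split; lra.
    * by apply/andP; split; lra.
    * by move=> j; exact: (hl j).1.
    * by move=> j; exact: (hl j).2.2.1.
  + apply: (final_c (lamk := lamk) (K := K) hsl hslsu su1 hp _ _ Ff x0 lnn' xcl).
    * by rewrite c1 cu.
    * by rewrite cv c1'.
    * by move=> j; exact: (hl j).2.1.
    * by move=> j; exact: (hl j).2.2.2.
Qed.
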